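(* Consider two GP-ASSMs (as defined in the context), built from the same training data, kernel and mean function, with maximum memory lengths $\overline m,\overline m'\in\mathbb{N}$, $\overline m'>\overline m$, evaluated along the same states and inputs $\bm\xi_{0:t}$, so that $\bm x_{t+1}^m\sim\mathcal N(\bm f_t(\bm\xi_t,\Xi^m_t),F_t(\bm\xi_t,\Xi^m_t))$ and $\bm x_{t+1}^{m'}\sim\mathcal N(\bm f_t(\bm\xi_t,\Xi^{m'}_t),F_t(\bm\xi_t,\Xi^{m'}_t))$. Then $$\operatorname{tr}\big(F_t(\bm\xi_t,\Xi^{m'}_t)\big)\le\operatorname{tr}\big(F_t(\bm\xi_t,\Xi^{m}_t)\big)$$ holds for all $t\in\mathbb{N}$.
   Context: Training set $\mathcal D=\{X,Y\}$ with input matrix $X\in\mathbb{R}^{n_\xi\times n_{\mathcal D}}$ and output matrix $Y\in\mathbb{R}^{n_{\mathcal D}\times n_x}$, outputs corrupted by Gaussian noise $\mathcal N(0,\sigma_n^2 I)$. A kernel $k:\mathbb{R}^{n_\xi}\times\mathbb{R}^{n_\xi}\to\mathbb{R}$ (symmetric, positive semidefinite) and a continuous mean function $m:\mathbb{R}^{n_\xi}\to\mathbb{R}$ are used for every output dimension. For matrices $A=[a_1,\dots,a_p]$, $B=[b_1,\dots,b_q]$ with columns in $\mathbb{R}^{n_\xi}$, $K(A,B)$ is the $p\times q$ matrix with entries $k(a_i,b_j)$, $\bm k(z,A)=(k(z,a_1),\dots,k(z,a_p))^\top$, $\bm m(A)=(m(a_1),\dots,m(a_p))^\top$, and $K:=K(X,X)$.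 GP-ASSM with maximum memory length $\overline m\in\mathbb{N}$: states $\bm x_t\in\mathbb{R}^{n_x}$, inputs $\bm u_t\in\mathbb{R}^{n_u}$, $\bm\xi_t=[\bm x_t;\bm u_t]\in\mathbb{R}^{n_\xi}$, $n_\xi=n_x+n_u$. For $t\in\mathbb{N}$ let $\underline m=\min(t,\overline m)$, memory $\Xi^m_t=[\bm\xi_{t-1},\dots,\bm\xi_{t-\underline m}]$ (empty if $\underline m=0$), $X^m_t=[X,\bm\xi_{t-\underline m},\dots,\bm\xi_{t-1}]$, $Y^m_t=[Y^\top,\bm x_{t-\underline m+1},\dots,\bm x_t]^\top$, and with $\Xi=[\bm\xi_{t-\underline m},\dots,\bm\xi_{t-1}]$, $K^m_t=\begin{bmatrix}K+\sigma_n^2I & K(X,\Xi)\\ K(\Xi,X)&K(\Xi,\Xi)\end{bmatrix}$ (and $K^m_t=K+\sigma_n^2 I$ if $\underline m=0$). Define $\bm f_t(\bm\xi_t,\Xi^m_t)\in\mathbb{R}^{n_x}$ with $i$-th component $m(\bm\xi_t)+\bm k(\bm\xi_t,X^m_t)^\top(K^m_t)^{-1}\big((Y^m_t)_{:,i}-\bm m(X^m_t)\big)$ and the diagonal matrix $F_t(\bm\xi_t,\Xi^m_t)$ with all diagonal entries $k(\bm\xi_t,\bm\xi_t)-\bm k(\bm\xi_t,X^m_t)^\top(K^m_t)^{-1}\bm k(\bm\xi_t,X^m_t)$ (inverses are Moore–Penrose pseudoinverses if singular). The GP-ASSM generates $\bm x^m_{t+1}\mid\bm\xi_{0:t}\sim\mathcal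 N(\bm f_t(\bm\xi_t,\Xi^m_t),F_t(\bm\xi_t,\Xi^m_t))$; quantities with superscript $m'$ are defined in the same way with $\overline m'$ in place of $\overline m$. *)

(* Defs.v *)
From HB Require Import structures.
From mathcomp Require Import all_boot all_order all_algebra.
From mathcomp Require Import boolp classical_sets reals topology normedtype.
Import numFieldNormedType.Exports.
Set Implicit Arguments. Unset Strict Implicit. Unset Printing Implicit Defensive.
Import Order.TTheory GRing.Theory Num.Theory.
Local Open Scope ring_scope.

Section GPASSM.
Variable R : realType.

Definition is_MP_inverse m n (A : 'M[R]_(m, n)) (P : 'M[R]_(n, m)) : Prop :=
  [/\ A *m P *m A = A, P *m A *m P = P,
      (A *m P)^T = A *m P & (P *m A)^T = P *m A].

Definition MP_pinv m n (A : 'M[R]_(m, n)) : 'M[R]_(n, m) :=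
  match pselect (exists P, is_MP_inverse A P) with
  | left h => projT1 (cid h)
  | right _ => 0
  end.

Definition gp_inv n (A : 'M[R]_n) : 'M[R]_n :=
  if A \in unitmx then invmx A else MP_pinv A.

Definition kernel_symmetric d (k : 'cV[R]_d -> 'cV[R]_d -> R) : Prop :=
  forall a b, k a b = k b a.

Definition Kmat d p q (k : 'cV[R]_d -> 'cV[R]_d -> R)
    (A : 'M[R]_(d, p)) (B : 'M[R]_(d, q)) : 'M[R]_(p, q) :=
  \matrix_(i, j) k (col i A) (col j B).

Definition kernel_psd d (k : 'cV[R]_d -> 'cV[R]_d -> R) : Prop :=
  forall p (A : 'M[R]_(d, p)) (c : 'cV[R]_p), 0 <= (c^T *m Kmat k A A *m c) 0 0.

Definition kvec d p (k : 'cV[R]_d -> 'cV[R]_d -> R) (z : 'cV[R]_d)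
    (A : 'M[R]_(d, p)) : 'cV[R]_p :=
  \col_i k z (col i A).

Definition mvec d p (mf : 'cV[R]_d -> R) (A : 'M[R]_(d, p)) : 'cV[R]_p :=
  \col_i mf (col i A).

Definition mlow (mbar t : nat) : nat := minn t mbar.

Definition Ximem d (xi : nat -> 'cV[R]_d) (mbar t : nat) : 'M[R]_(d, mlow mbar t) :=
  \matrix_(i, j) xi (t - mlow mbar t + j)%N i 0.

Definition Xmem d nD (X : 'M[R]_(d, nD)) (xi : nat -> 'cV[R]_d) (mbar t : nat)
  : 'M[R]_(d, nD + mlow mbar t) := row_mx X (Ximem xi mbar t).

Definition Ymem nx nD (Y : 'M[R]_(nD, nx)) (x : nat -> 'cV[R]_nx) (mbar t : nat)
  : 'M[R]_(nD + mlow mbar t, nx) :=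
  col_mx Y (\matrix_(j < mlow mbar t, i < nx) x (t - mlow mbar t + j.+1)%N i 0).

Definition Kmem d nD (k : 'cV[R]_d -> 'cV[R]_d -> R) (sigma_n : R)
    (X : 'M[R]_(d, nD)) (xi : nat -> 'cV[R]_d) (mbar t : nat)
  : 'M[R]_(nD + mlow mbar t) :=
  let Xi := Ximem xi mbar t in
  block_mx (Kmat k X X + sigma_n ^+ 2 *: 1%:M) (Kmat k X Xi)
           (Kmat k Xi X) (Kmat k Xi Xi).

Definition gp_var d nD (k : 'cV[R]_d -> 'cV[R]_d -> R) (sigma_n : R)
    (X : 'M[R]_(d, nD)) (xi : nat -> 'cV[R]_d) (mbar t : nat) : R :=
  let kv := kvec k (xi t) (Xmem X xi mbar t) in
  k (xi t) (xi t) - (kv^T *m gp_inv (Kmem k sigma_n X xi mbar t) *m kv) 0 0.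

Definition Ft nx d nD (k : 'cV[R]_d -> 'cV[R]_d -> R) (sigma_n : R)
    (X : 'M[R]_(d, nD)) (xi : nat -> 'cV[R]_d) (mbar t : nat) : 'M[R]_nx :=
  (gp_var k sigma_n X xi mbar t)%:M.

Definition ft nx d nD (k : 'cV[R]_d -> 'cV[R]_d -> R) (mf : 'cV[R]_d -> R)
    (sigma_n : R) (X : 'M[R]_(d, nD)) (Y : 'M[R]_(nD, nx))
    (x : nat -> 'cV[R]_nx) (xi : nat -> 'cV[R]_d) (mbar t : nat) : 'cV[R]_nx :=
  let Xm := Xmem X xi mbar t in
  let kv := kvec k (xi t) Xm in
  \col_i (mf (xi t) + (kv^T *m gp_inv (Kmem k sigma_n X xi mbar t)
            *m (col i (Ymem Y x mbar t) - mvec mf Xm)) 0 0).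

End GPASSM.

(* Main.v *)
Require Import Defs.
From HB Require Import structures.
From mathcomp Require Import all_boot all_order all_algebra.
From mathcomp Require Import boolp classical_sets reals topology normedtype.
From mathcomp Require Import zify ring lra.
Import numFieldNormedType.Exports.
Set Implicit Arguments. Unset Strict Implicit. Unset Printing Implicit Defensive.
Import Order.TTheory GRing.Theory Num.Theory.
Local Open Scope ring_scope.

Section A.
Variable R : realType.

Lemma sqsum_eq0 n (v : 'rV[R]_n) : (v *m v^T) 0 0 = 0 -> v = 0.
Proof.
rewrite mxE => h; apply/matrixP => i j; rewrite (ord1 i) mxE.
have : forall l, true -> 0 <= v 0 l * v^T l 0.
  by move=> l _; rewrite mxE -expr2 sqr_ge0.
move=> /psumr_eq0P /(_ h) /(_ j isT); rewrite mxE => /eqP.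
by rewrite mulf_eq0 orbb => /eqP.
Qed.

Lemma free_gram_unit r n (B : 'M[R]_(r, n)) : row_free B -> B *m B^T \in unitmx.
Proof.
move=> fB; rewrite unitmxE unitfE; apply/negP => /det0P [v nv0 hv].
have : (v *m B) *m (v *m B)^T = 0.
  by rewrite trmx_mul !mulmxA -(mulmxA v) hv mul0mx.
move=> h0; have vB0 : v *m B = 0 by apply: sqsum_eq0; rewrite h0 mxE.
move: nv0; rewrite -(mul0mx _ B) in vB0.
by rewrite (row_free_inj fB vB0) eqxx.
Qed.

Lemma MP_exists m n (A : 'M[R]_(m, n)) : exists P, is_MP_inverse A P.
Proof.
have [r [B [C [AE [fB fC]]]]] : exists r (B : 'M[R]_(r, n)) (C : 'M[R]_(m, r)),
    A = C *m B /\ row_free B /\ row_free C^T.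
  exists (\rank A), (row_base A), (A *m pinvmx (row_base A)).
  have AE : A = A *m pinvmx (row_base A) *m row_base A.
    by rewrite mulmxKpV // eq_row_base.
  split => //; split; first exact: row_base_free.
  rewrite /row_free mxrank_tr eqn_leq rank_leq_col /=.
  by have := mxrankM_maxl (A *m pinvmx (row_base A)) (row_base A); rewrite -AE.
have uB := free_gram_unit fB.
have uC := free_gram_unit fC; rewrite trmxK in uC.
exists (B^T *m invmx (B *m B^T) *m invmx (C^T *m C) *m C^T).
have e2 : forall p (X : 'M[R]_(p, r)), X *m B *m B^T *m invmx (B *m B^T) = X.
  by move=> p X; rewrite -(mulmxA X) -(mulmxA X) (mulmxV uB) mulmx1.
have e3 : forall p (X : 'M[R]_(p, r)), X *m invmx (C^T *m C) *m C^T *m C = X.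
  by move=> p X; rewrite -(mulmxA X) -(mulmxA X) -(mulmxA (invmx _)) (mulVmx uC) mulmx1.
have sC : (invmx (C^T *m C))^T = invmx (C^T *m C).
  by rewrite trmx_inv trmx_mul trmxK.
have sB : (invmx (B *m B^T))^T = invmx (B *m B^T).
  by rewrite trmx_inv trmx_mul trmxK.
have AP : A *m (B^T *m invmx (B *m B^T) *m invmx (C^T *m C) *m C^T)
   = C *m invmx (C^T *m C) *m C^T.
  by rewrite AE !mulmxA e2.
have PA : (B^T *m invmx (B *m B^T) *m invmx (C^T *m C) *m C^T) *m A
   = B^T *m invmx (B *m B^T) *m B.
  by rewrite AE !mulmxA e3.
split.
- by rewrite AP {1}AE !mulmxA e3 -AE.
- by rewrite PA !mulmxA e2.
- by rewrite AP !trmx_mul trmxK sC !mulmxA.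
- by rewrite PA !trmx_mul trmxK sB !mulmxA.
Qed.

Lemma gp_inv_g1 n (K : 'M[R]_n) : K *m gp_inv K *m K = K.
Proof.
rewrite /gp_inv; case: ifP => uK; first by rewrite mulmxV // mul1mx.
rewrite /MP_pinv; case: pselect => [h|]; last by move: (MP_exists K).
by case: (cid h) => P [].
Qed.

End A.

Section B.
Variable R : realType.

Definition augpsd N (K : 'M[R]_N) (kv : 'cV[R]_N) (kzz : R) :=
  forall (c : 'cV[R]_N) (b : R),
    0 <= (c^T *m K *m c) 0 0 + 2 * b * (c^T *m kv) 0 0 + b ^+ 2 * kzz.

Lemma col_mul p q r (A : 'M[R]_(p, q)) (B : 'M[R]_(q, r)) j :
  A *m col j B = col j (A *m B).
Proof. by apply/matrixP => a b; rewrite !mxE; apply: eq_bigr => l _; rewrite !mxE. Qed.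

Lemma tr11 (A : 'M[R]_1) : A 0 0 = A^T 0 0.
Proof. by rewrite mxE. Qed.

Lemma range_kv N (K : 'M[R]_N) kv kzz : K^T = K -> augpsd K kv kzz ->
  exists w, kv = K *m w.
Proof.
move=> sK hp.
case: (boolP (kv^T <= K)%MS) => [/submxP [y hy]|].
  by exists y^T; rewrite -[kv]trmxK hy trmx_mul sK.
rewrite submxE => nz.
have [j hj] : exists j, (kv^T *m cokermx K) 0 j != 0.
  apply/existsP; apply: contraNT nz; rewrite negb_exists => /forallP h0.
  apply/eqP/matrixP => i j; rewrite (ord1 i) [RHS]mxE.
  by have := h0 j; rewrite negbK => /eqP ->.
set v := col j (cokermx K).
have Kv : K *m v = 0 by rewrite /v col_mul mulmx_coker; apply/matrixP=> a b; rewrite !mxE.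
set s := (kv^T *m cokermx K) 0 j.
have vs : (v^T *m kv) 0 0 = s.
  by rewrite tr11 trmx_mul trmxK /v col_mul mxE.
set a := - (kzz + 1) / (2 * s).
have := hp (a *: v) 1.
have e1 : (a *: (v^T *m kv)) 0 0 = a * s by rewrite mxE vs.
rewrite !linearZ /= -!scalemxAl -mulmxA Kv mulmx0 !scaler0 e1 mxE.
rewrite expr1n mul1r mulr1 add0r.
have -> : 2 * (a * s) = - (kzz + 1).
  by rewrite /a; field; exact: hj.
lra.
Qed.

Lemma quad_g1 N (K P : 'M[R]_N) (kv w : 'cV[R]_N) : K *m P *m K = K -> K^T = K ->
  kv = K *m w -> kv^T *m P *m kv = w^T *m K *m w.
Proof.
move=> g1 sK ->; rewrite trmx_mul sK !mulmxA; congr (_ *m w).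
by rewrite -[w^T *m K *m P]mulmxA -mulmxA g1.
Qed.

Lemma var_mono N N' (K : 'M[R]_N) (K' : 'M[R]_N') kv kv' (S : 'M[R]_(N, N')) kzz :
  K^T = K -> K'^T = K' -> K = S *m K' *m S^T -> kv = S *m kv' ->
  augpsd K kv kzz -> augpsd K' kv' kzz ->
  kzz - (kv'^T *m gp_inv K' *m kv') 0 0 <= kzz - (kv^T *m gp_inv K *m kv) 0 0.
Proof.
move=> sK sK' KE kvE p p'.
have [w hw] := range_kv sK p.
have [w' hw'] := range_kv sK' p'.
rewrite (quad_g1 (gp_inv_g1 K) sK hw) (quad_g1 (gp_inv_g1 K') sK' hw').
set c := S^T *m w.
have q1 : (w^T *m K *m w) = c^T *m K' *m c.
  by rewrite KE /c trmx_mul trmxK !mulmxA.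
have q2 : (c^T *m K' *m w') = c^T *m K' *m c.
  by rewrite -mulmxA -hw' /c trmx_mul trmxK -[w^T *m S *m kv']mulmxA -kvE hw KE !mulmxA.
have q3 : (w'^T *m K' *m c) 0 0 = (c^T *m K' *m w') 0 0.
  by rewrite tr11 !trmx_mul !trmxK sK' mulmxA.
have := p' (w' - c) 0.
rewrite mulr0 mul0r expr0n /= mul0r !addr0 linearB /=.
rewrite raddfB /= !mulmxBl.
rewrite q1 -q2 -q3.
move: (w'^T *m K' *m w') (w'^T *m K' *m c) (c^T *m K' *m w') (c^T *m K' *m c) => A B C D.
rewrite !mxE. lra.
Qed.

End B.

Section C.
Variable R : realType.
Variables (d nD : nat) (k : 'cV[R]_d -> 'cV[R]_d -> R) (sg : R)
  (X : 'M[R]_(d, nD)) (xi : nat -> 'cV[R]_d).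
Hypothesis ksym : kernel_symmetric k.
Hypothesis kpsd : kernel_psd k.

Lemma colrow n1 n2 (A : 'M[R]_(d, n1)) (B : 'M[R]_(d, n2)) i :
  col i (row_mx A B) = match split i with inl a => col a A | inr b => col b B end.
Proof.
apply/matrixP => r z; rewrite !mxE; case: (split i) => a; by rewrite mxE.
Qed.

Lemma Kmem_E mb t i j : Kmem k sg X xi mb t i j =
  k (col i (Xmem X xi mb t)) (col j (Xmem X xi mb t)) +
  (if (val i == val j) && (val i < nD)%N then sg ^+ 2 else 0).
Proof.
rewrite /Kmem /block_mx /Xmem !colrow !mxE.
case: splitP => a ha; rewrite !mxE; case: splitP => b hb; rewrite !mxE.
- rewrite andbT; case: (eqVneq a b) => [eab|nab].
    have -> : (\val i == \val j) = true by apply/eqP; rewrite /= ha hb eab.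
    by rewrite mulr1.
  rewrite mulr0; have -> : (\val i == \val j) = false.
    by apply/negP => /eqP; rewrite /= ha hb => /val_inj; apply/eqP.
  by [].
- have -> : (\val i == \val j) = false by apply/negP => /eqP /=; have := ltn_ord a; lia.
  by rewrite addr0.
- by rewrite andbF addr0.
- by rewrite andbF addr0.
Qed.


Lemma Kmem_sym mb t : (Kmem k sg X xi mb t)^T = Kmem k sg X xi mb t.
Proof.
apply/matrixP => i j; rewrite mxE !Kmem_E ksym; congr (_ + _).
case: (eqVneq (val i) (val j)) => [e|ne]; first by rewrite e.
by [].
Qed.

Definition Dn N := \matrix_(i < N, j < N)
  (if (val i == val j) && (val i < nD)%N then sg ^+ 2 else 0 : R).

Lemma Kmem_split mb t : Kmem k sg X xi mb t =
  Kmat k (Xmem X xi mb t) (Xmem X xi mb t) + Dn _.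
Proof. by apply/matrixP => i j; rewrite Kmem_E !mxE. Qed.

Lemma Dn_psd N (c : 'cV[R]_N) : 0 <= (c^T *m Dn N *m c) 0 0.
Proof.
rewrite mxE; apply: sumr_ge0 => j _.
have -> : (c^T *m Dn N) 0 j = c j 0 * (if (val j < nD)%N then sg ^+ 2 else 0).
  rewrite mxE (bigD1 j) //= big1 ?addr0.
    by rewrite !mxE eqxx.
  move=> i nij; rewrite !mxE.
  have -> : (val i == val j) = false by apply/negP => /eqP /val_inj /eqP; rewrite (negPf nij).
  by rewrite mulr0.
case: ifP => _; last by rewrite !mulr0 mul0r.
by rewrite mulrAC -expr2 mulr_ge0 ?sqr_ge0.
Qed.

Lemma Kmat_rowl n1 n2 q (A1 : 'M[R]_(d, n1)) (A2 : 'M[R]_(d, n2)) (B : 'M[R]_(d, q)) :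
  Kmat k (row_mx A1 A2) B = col_mx (Kmat k A1 B) (Kmat k A2 B).
Proof.
apply/matrixP => i j; rewrite !mxE colrow; case: (split i) => a /=; by rewrite mxE.
Qed.

Lemma Kmat_rowr n1 n2 q (A1 : 'M[R]_(d, n1)) (A2 : 'M[R]_(d, n2)) (B : 'M[R]_(d, q)) :
  Kmat k B (row_mx A1 A2) = row_mx (Kmat k B A1) (Kmat k B A2).
Proof.
apply/matrixP => i j; rewrite !mxE colrow; case: (split j) => a /=; by rewrite mxE.
Qed.

Lemma aug_Kmem mb t : augpsd (Kmem k sg X xi mb t)
  (kvec k (xi t) (Xmem X xi mb t)) (k (xi t) (xi t)).
Proof.
move=> c b.
set Xm := Xmem X xi mb t; set z := xi t; set kv := kvec k z Xm.
have := kpsd (row_mx Xm z) (col_mx c (b%:M)).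
rewrite Kmat_rowl (Kmat_rowr Xm z Xm) (Kmat_rowr Xm z z) tr_col_mx mul_row_col !mul_mx_row mulmxDl !mul_row_col.
have K12 : Kmat k Xm z = kv.
  by apply/matrixP => i j; rewrite !mxE (ord1 j) col_id ksym.
have K21 : Kmat k z Xm = kv^T.
  by apply/matrixP => i j; rewrite !mxE (ord1 i) col_id.
rewrite K12 K21 tr_scalar_mx !mul_scalar_mx !mul_mx_scalar -!scalemxAl.
rewrite Kmem_split mulmxDr mulmxDl [X in 0 <= X + _ + _]mxE.
have := Dn_psd c.
rewrite -/Xm.
have e : kv^T *m c = (c^T *m kv)^T by rewrite trmx_mul trmxK.
have hz : Kmat k z z 0 0 = k z z by rewrite mxE col_id.
rewrite e -hz.
move: (c^T *m Kmat k Xm Xm *m c) (c^T *m kv) (Kmat k z z) (c^T *m Dn _ *m c) => M1 M2 M3 M4.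
rewrite !mxE => hD h.
nra.
Qed.

End C.

Section D.
Variable R : realType.
Variables (d nD : nat) (k : 'cV[R]_d -> 'cV[R]_d -> R) (sg : R)
  (X : 'M[R]_(d, nD)) (xi : nat -> 'cV[R]_d).
Variables (mb mb' t : nat).
Hypothesis hle : (mb <= mb')%N.

Let f (i : nat) := if (i < nD)%N then i else (i + (mlow mb' t - mlow mb t))%N.

Lemma sig_proof (i : 'I_(nD + mlow mb t)) : (f i < nD + mlow mb' t)%N.
Proof. have := ltn_ord i; rewrite /f /mlow; case: ifP => _; lia. Qed.

Definition sig (i : 'I_(nD + mlow mb t)) : 'I_(nD + mlow mb' t) := Ordinal (sig_proof i).

Lemma col_sig i : col (sig i) (Xmem X xi mb' t) = col i (Xmem X xi mb t).
Proof.
rewrite /Xmem !colrow.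
have hv : nat_of_ord (sig i) = f i by [].
move: hv; rewrite /f => hv.
have e1 : mlow mb t = minn t mb by [].
have e2 : mlow mb' t = minn t mb' by [].
case: splitP => a ha; case: splitP => b hb; move: hv; case: ifP => h1 h2; rewrite h2 in ha.
- by congr col; apply: ord_inj; rewrite -ha.
- by exfalso; have := ltn_ord b; lia.
- by exfalso; have := ltn_ord a; lia.
- by exfalso; have := ltn_ord a; lia.
- by exfalso; have := ltn_ord b; lia.
- by exfalso; have := ltn_ord b; lia.
- by exfalso; have := ltn_ord b; lia.
- apply/matrixP => r z; rewrite !mxE; congr (xi _ r 0).
  have := ltn_ord a; have := ltn_ord b; lia.
Qed.

Definition Ssel : 'M[R]_(nD + mlow mb t, nD + mlow mb' t) := rowsub sig 1%:M.

Lemma mulST p (A : 'M[R]_(p, nD + mlow mb' t)) : A *m Ssel^T = colsub sig A.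
Proof.
apply: trmx_inj; rewrite trmx_mul trmxK -rowsubE.
by apply/matrixP => i j; rewrite !mxE.
Qed.

Lemma SKS : Kmem k sg X xi mb t = Ssel *m Kmem k sg X xi mb' t *m Ssel^T.
Proof.
rewrite mulST /Ssel -rowsubE; apply/matrixP => i j; rewrite Kmem_E [RHS]mxE [RHS]mxE Kmem_E !col_sig.
congr (_ + _).
have hi : \val (sig i) = f i by [].
have hj : \val (sig j) = f j by [].
rewrite hi hj /f -[\val i]/(nat_of_ord i) -[\val j]/(nat_of_ord j).
congr (if _ then _ else _).
case: (ltnP i nD) => a; case: (ltnP j nD) => b;
  apply/idP/idP => /andP [/eqP e1 e2]; apply/andP; split; try apply/eqP; lia.
Qed.

Lemma Skv : kvec k (xi t) (Xmem X xi mb t) = Ssel *m kvec k (xi t) (Xmem X xi mb' t).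
Proof.
by rewrite /Ssel -rowsubE; apply/matrixP => i j; rewrite !mxE col_sig.
Qed.

End D.

Unset Implicit Arguments.
Theorem corollary2 (R : realType) (nx nu nD : nat)
    (X : 'M[R]_(nx + nu, nD)) (Y : 'M[R]_(nD, nx)) (sigma_n : R)
    (k : 'cV[R]_(nx + nu) -> 'cV[R]_(nx + nu) -> R)
    (mf : 'cV[R]_(nx + nu) -> R)
    (k_sym : kernel_symmetric k) (k_psd : kernel_psd k)
    (mf_cont : continuous mf)
    (x : nat -> 'cV[R]_nx) (u : nat -> 'cV[R]_nu)
    (mbar mbar' : nat) (hm : (mbar < mbar')%N) :
  let xi := fun s => col_mx (x s) (u s) in
  forall t : nat,
    \tr (Ft nx k sigma_n X xi mbar' t) <= \tr (Ft nx k sigma_n X xi mbar t).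
Proof.
move=> xi t; rewrite /Ft !mxtrace_scalar; apply: ler_wMn2r.
rewrite /gp_var.
apply: (var_mono (S := Ssel R nD t (ltnW hm))).
- exact: Kmem_sym.
- exact: Kmem_sym.
- exact: SKS.
- exact: Skv.
- exact: aug_Kmem.
- exact: aug_Kmem.
Qed.
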